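(* Let $t,t',\Delta\in\mathbb{N}$ with $t\le t'$. If $A$ $(t,\Delta)$-approximates $B$, then there exists $u\in(t-\Delta,t]$ such that $A$ $(t',\Delta)$-approximates $B\cap[u]$.
   Context: $\mathbb{N}=\{0,1,2,\dots\}$, $[t]=\{0,1,\dots,t\}$. For $A\subseteq[t]$ and $b\in\mathbb{N}$ define $\mathrm{apx}^-_t(b,A)=\max\{a\in A\cup\{t+1\}: a\le b\}$ and $\mathrm{apx}^+_t(b,A)=\min\{a\in A\cup\{t+1\}: a\ge b\}$, with $\max\emptyset=-\infty$, $\min\emptyset=\infty$. $A$ $(t,\Delta)$-approximates $B$ if $A\subseteq B\subseteq[t]$ and for every $b\in B$, $\mathrm{apx}^+_t(b,A)-\mathrm{apx}^-_t(b,A)\le\Delta$. *)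

(* Defs.v *)
From mathcomp Require Import all_boot.
Set Implicit Arguments. Unset Strict Implicit. Unset Printing Implicit Defensive.

(* Sets of naturals are boolean predicates [pred nat]; [t] = {0,...,t}. *)

(* apx^-_t(b,A) = max{a in A u {t+1} : a <= b};  None encodes -oo (empty max). *)
Definition apx_minus (t b : nat) (A : pred nat) : option nat :=
  let s := [seq a <- iota 0 b.+1 | (a \in A) || (a == t.+1)] in
  if s is x :: s' then Some (last x s') else None.

(* apx^+_t(b,A) = min{a in A u {t+1} : a >= b};  None encodes +oo (empty min).
   The search is over b..t+1; this is exact for every A included in [t]
   (the only case in which the paper defines apx). *)
Definition apx_plus (t b : nat) (A : pred nat) : option nat :=
  let s := [seq a <- iota b (t.+2 - b) | (a \in A) || (a == t.+1)] in
  if s is x :: _ then Some x else None.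

(* A (t,Delta)-approximates B.  A difference involving -oo or +oo is +oo,
   hence never <= Delta (encoded as false). *)
Definition approximates (t Delta : nat) (A B : pred nat) : Prop :=
  {subset A <= B} /\ {subset B <= [pred x | x <= t]} /\
  forall b, b \in B ->
    match apx_plus t b A, apx_minus t b A with
    | Some hi, Some lo => (hi <= lo + Delta)
    | _, _ => false
    end.

(* Main.v *)
Require Import Defs.
From mathcomp Require Import all_boot.
From mathcomp Require Import zify.

Lemma apx_plus_mem t b A hi : apx_plus t b A = Some hi ->
  b <= hi /\ ((hi \in A) || (hi == t.+1)).
Proof.
rewrite /apx_plus.
case E: [seq a <- iota b (t.+2 - b) | (a \in A) || (a == t.+1)] => [|x s] //= [<-].
have : x \in [seq a <- iota b (t.+2 - b) | (a \in A) || (a == t.+1)] by rewrite E mem_head.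
by rewrite mem_filter mem_iota => /andP[-> /andP[-> _]].
Qed.

Lemma apx_minus_mem t b A lo : apx_minus t b A = Some lo ->
  lo <= b /\ ((lo \in A) || (lo == t.+1)).
Proof.
rewrite /apx_minus.
case E: [seq a <- iota 0 b.+1 | (a \in A) || (a == t.+1)] => [|x s] //= [<-].
have : last x s \in [seq a <- iota 0 b.+1 | (a \in A) || (a == t.+1)] by rewrite E mem_last.
by rewrite mem_filter mem_iota => /andP[-> /andP[_ h]]; split.
Qed.

Lemma apx_minus_t t t' b A : b <= t -> t <= t' -> apx_minus t' b A = apx_minus t b A.
Proof.
move=> hb ht; rewrite /apx_minus.
rewrite (@eq_in_filter _ _ (fun a => (a \in A) || (a == t.+1))) //.
move=> a; rewrite mem_iota => /andP[_ ha].
have -> : (a == t'.+1) = false by apply/eqP; lia.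
have -> : (a == t.+1) = false by apply/eqP; lia.
by [].
Qed.

Lemma apx_plus_t t t' b A a : a \in A -> b <= a -> a <= t -> t <= t' ->
  apx_plus t' b A = apx_plus t b A.
Proof.
move=> aA ba hat tt.
rewrite /apx_plus.
have sp : forall T, a <= T -> iota b (T.+2 - b) =
   iota b (a.+1 - b) ++ iota (b + (a.+1 - b)) (T.+2 - b - (a.+1 - b)).
  by move=> T aT; rewrite -iotaD subnKC //; lia.
rewrite (sp t') ?(sp t) //; last by lia.
rewrite !filter_cat.
rewrite (@eq_in_filter _ (fun a0 => (a0 \in A) || (a0 == t'.+1))
   (fun a0 => (a0 \in A) || (a0 == t.+1))); last first.
  move=> x; rewrite mem_iota => /andP[_ hx].
  have -> : (x == t'.+1) = false by apply/eqP; lia.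
  have -> : (x == t.+1) = false by apply/eqP; lia.
  by [].
have : a \in [seq a0 <- iota b (a.+1 - b) | (a0 \in A) || (a0 == t.+1)].
  by rewrite mem_filter mem_iota aA /=; apply/andP; split; lia.
by case: [seq a0 <- iota b (a.+1 - b) | (a0 \in A) || (a0 == t.+1)].
Qed.

Theorem lemma4p9 (t t' Delta : nat) (A B : pred nat) :
  0 < Delta -> t <= t' ->
  approximates t Delta A B ->
  exists u : nat, t < u + Delta /\ u <= t /\
    approximates t' Delta A [pred x | (x \in B) && (x <= u)].
Proof.
move=> hD htt [hAB [hBt hB]].
case hasA: (has (mem A) (iota 0 t.+1)).
- have exA : exists n, [pred a | a \in A] n.
    by case/hasP: hasA => x _ xA; exists x.
  have bndA : forall n, [pred a | a \in A] n -> n <= t.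
    by move=> n /= nA; have := hBt n (hAB n nA).
  case: (ex_maxnP exA bndA) => m /= Am maxm.
  have mt : m <= t by apply: bndA.
  set u := if t < m + Delta then m else t.
  have claim : forall b, b \in B -> b <= u -> b <= m.
    move=> b bB; rewrite /u; case: ifP => // hmt bt.
    rewrite leqNgt; apply/negP => mb.
    have := hB b bB.
    case Ep: (apx_plus t b A) => [hi|] //; case Em: (apx_minus t b A) => [lo|] //.
    move=> hle.
    have [hi1 hi2] := @apx_plus_mem _ _ _ _ Ep.
    have [lo1 lo2] := @apx_minus_mem _ _ _ _ Em.
    have blt : b <= t by apply: hBt.
    have lom : lo <= m.
      case/orP: lo2 => [loA|/eqP loE]; first exact: maxm.
      lia.
    case/orP: hi2 => [hiA|/eqP hiE].
      have := maxm _ hiA; lia.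
    move/negbT: hmt; lia.
  exists u; split; first by rewrite /u; case: ifP => //; lia.
  split; first by rewrite /u; case: ifP.
  split; last split.
  + move=> a aA; rewrite inE /=; apply/andP; split; first exact: hAB.
    have := maxm _ aA; rewrite /u; case: ifP => _; lia.
  + move=> x; rewrite inE /= => /andP[_ xu]; rewrite inE /=.
    move: xu; rewrite /u; case: ifP => _; lia.
  + move=> b; rewrite inE /= => /andP[bB bu].
    have bm := claim b bB bu.
    have bt : b <= t by apply: hBt.
    rewrite (@apx_minus_t t t' b A bt htt) (@apx_plus_t t t' b A m Am bm mt htt).
    exact: (hB b bB).
- have B0 : forall b, b \in B -> False.
    move=> b bB; have := hB b bB.
    case Ep: (apx_plus t b A) => [hi|] //; case Em: (apx_minus t b A) => [lo|] //.
    move=> _.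
    have [lo1 lo2] := @apx_minus_mem _ _ _ _ Em.
    have blt : b <= t by apply: hBt.
    case/orP: lo2 => [loA|/eqP loE]; last lia.
    move/negbT: hasA => /hasPn /(_ lo).
    rewrite mem_iota /= loA; move=> h; have : lo < t.+1 by lia.
    by move/h.
  exists t; split; first lia.
  split; first by [].
  split; last split.
  + by move=> a aA; exfalso; apply: (B0 a (hAB a aA)).
  + by move=> x; rewrite inE /= => /andP[xB _]; exfalso; apply: (B0 x xB).
  + by move=> b; rewrite inE /= => /andP[bB _]; exfalso; apply: (B0 b bB).
Qed.
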